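(* Let $d \geq 2$ and let $\Gamma \leq \operatorname{GL}_d(\mathbb{Z})$ be a subgroup such that the linear action of $\Gamma$ on $\mathbb{R}^d$ is irreducible and $\Gamma$ is generated by a finite set of unipotent matrices. Then for every $v \in \mathbb{Z}^d \setminus \{0\}$ there exist a sequence $\gamma_1, \gamma_2, \ldots \in \Gamma$ and polynomials $p_1(t), \ldots, p_d(t) \in \mathbb{Z}[t]$ such that $\gamma_n v = (p_1(n), \ldots, p_d(n))$ for all $n \geq 1$, and $1, p_1(t), \ldots, p_d(t)$ are linearly independent (i.e., no non-trivial linear combination of $p_1, \ldots, p_d$ is constant). In particular the sequence $(\gamma_n v)_n$ is not contained in any proper affine subspace of $\mathbb{R}^d$. *)

(* Defs.v *)
From HB Require Import structures.
From mathcomp Require Import all_boot all_order all_algebra.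
Set Implicit Arguments. Unset Strict Implicit. Unset Printing Implicit Defensive.
Import Order.TTheory GRing.Theory Num.Theory.
Local Open Scope ring_scope.

Definition unipotent (d : nat) (g : 'M[int]_d) : Prop :=
  exists k : nat, (g - 1%:M) ^+ k = 0.

Inductive gen_group (d : nat) (S : seq 'M[int]_d) : 'M[int]_d -> Prop :=
| gen_one : gen_group S 1%:M
| gen_mul g s : gen_group S g -> s \in S -> gen_group S (g *m s)
| gen_mulV g s : gen_group S g -> s \in S -> gen_group S (g *m invmx s).

Definition mxR (R : pzRingType) (d : nat) (g : 'M[int]_d) : 'M[R]_d :=
  map_mx (fun z : int => z%:~R) g.

(* A subspace is
   encoded as the row space of U; its transposes (the column vectors) are
   invariant under v |-> g v iff (U *m g^T <= U)%MS. *)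
Definition irreducible_action (R : fieldType) (d : nat)
    (G : 'M[int]_d -> Prop) : Prop :=
  forall U : 'M[R]_d,
    (forall g, G g -> (U *m (mxR R g)^T <= U)%MS) ->
    U = 0 \/ row_full U.

(* Main.v *)
Require Import Defs.
From HB Require Import structures.
From mathcomp Require Import all_boot all_order all_algebra zify.
From Stdlib Require Import Classical.
Import Order.TTheory GRing.Theory Num.Theory.
Set Implicit Arguments. Unset Strict Implicit. Unset Printing Implicit Defensive.
Local Open Scope ring_scope.



Lemma roots_fin (R : numDomainType) (N : nat) (p : {poly R}) :
  (size p <= N)%N -> (forall n, (n < N)%N -> p.[n%:R] = 0) -> p = 0.
Proof.
move=> hs hr; apply/eqP; apply/negPn/negP => hp.
have := max_poly_roots hp (rs := [seq n%:R | n <- iota 0 N]).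
rewrite size_map size_iota.
have -> : all (root p) [seq n%:R | n <- iota 0 N].
  apply/allP => x /mapP [n]; rewrite mem_iota add0n => /andP [_ hn] ->.
  by apply/rootP; apply: hr.
have -> : uniq [seq (n%:R : R) | n <- iota 0 N].
  rewrite map_inj_uniq ?iota_uniq // => a b /eqP; rewrite eqr_nat => /eqP.
  done.
move=> /(_ isT isT) h; move: (leq_trans h hs); by rewrite ltnn.
Qed.

Lemma roots_inf (R : numDomainType) (p : {poly R}) :
  (forall n : nat, p.[n%:R] = 0) -> p = 0.
Proof. by move=> h; apply: (@roots_fin R (size p) p (leqnn _)) => n _. Qed.

Lemma sub_ker (F : fieldType) m1 m2 n (X : 'M[F]_(m1, n)) (Y : 'M[F]_(m2, n)) :
  (forall c : 'cV_n, Y *m c = 0 -> X *m c = 0) -> (X <= Y)%MS.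
Proof.
move=> h; rewrite submxE; apply/eqP/matrixP => i j.
have hY : Y *m (cokermx Y *m delta_mx j (0 : 'I_1)) = 0.
  by rewrite mulmxA mulmx_coker mul0mx.
have := congr1 (fun M : 'M_(m1,1) => M i 0) (h _ hY).
by rewrite /= mulmxA -colE !mxE.
Qed.

Lemma fact_dvd k K : (k <= K)%N -> (k`! %| K`!)%N.
Proof.
move=> hk; rewrite -(ffact_fact (leq_subr k K)) subKn //.
exact: dvdn_mull.
Qed.


Lemma size_map_le (aR rR : nzSemiRingType) (f : aR -> rR) (p : {poly aR}) :
  (size (map_poly f p) <= size p)%N.
Proof. by rewrite map_polyE (leq_trans (size_Poly _)) // size_map. Qed.

Lemma horner_mapw (T : comNzRingType) (n : nat) (p : {poly int}) (x : T) :
  (size p <= n)%N ->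
  (map_poly (intr : int -> T) p).[x] = \sum_(i < n) (p`_i)%:~R * x ^+ i.
Proof.
move=> hs; rewrite (@horner_coef_wide _ n); last by apply: leq_trans hs; apply: size_map_le.
by apply: eq_bigr => i _; rewrite coef_map.
Qed.

Definition Fp (k : nat) : {poly int} := \prod_(i < k) ('X - (i%:R)%:P).

Lemma Fp_eval (T : comNzRingType) k n :
  (map_poly (intr : int -> T) (Fp k)).[n%:R] = (n ^_ k)%:R.
Proof.
rewrite /Fp rmorph_prod /= horner_prod ffact_prod natr_prod.
case: (ltnP n k) => hnk.
  rewrite (bigD1 (Ordinal hnk)) //= [in RHS](bigD1 (Ordinal hnk)) //=.
  by rewrite map_polyXsubC hornerXsubC rmorph_nat subrr subnn !mul0r.
apply: eq_bigr => i _; rewrite map_polyXsubC hornerXsubC rmorph_nat natrB //.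
exact: leq_trans (ltnW (ltn_ord i)) hnk.
Qed.

Lemma size_Fp k : size (Fp k) = k.+1.
Proof. by rewrite /Fp size_prod_XsubC -[index_enum _]enumT -cardT card_ord. Qed.

Definition cp (m k : nat) : {poly int} :=
  \poly_(j < k.+1) ((Fp k)`_j * ((m ^ j) %/ k`!)%N%:R).

Lemma cp_eval (T : comNzRingType) m k (x : T) : (k`! %| m)%N ->
  (map_poly (intr : int -> T) (cp m k)).[x] *+ k`! =
  (map_poly (intr : int -> T) (Fp k)).[m%:R * x].
Proof.
move=> hd.
rewrite (@horner_mapw T k.+1 _ x (size_poly _ _)) (@horner_mapw T k.+1 _ _ (eq_leq (size_Fp k))).
rewrite -sumrMnl; apply: eq_bigr => j _.
rewrite coef_poly ltn_ord exprMn -mulrnAl rmorphM /= rmorph_nat.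
case: (posnP j) => hj.
  case: (posnP k) => hk.
    by rewrite hj hk /= expn0 divn1 fact0 mulr1n !expr0 !mulr1.
  have -> : (Fp k)`_j = 0.
    rewrite hj -horner_coef0.
    have := Fp_eval int k 0; rewrite map_poly_id => [->|]; last by move=> z _; rewrite intz.
    by rewrite ffact0n eqn0Ngt hk.
  by rewrite !mulr0z mul0r mul0rn !mul0r.
have hdv : (k`! %| m ^ j)%N by apply: dvdn_exp.
by rewrite -mulrnAr -mulr_natr -natrM divnK // natrX mulrA.
Qed.



Lemma sum_widen (V : nmodType) (f : nat -> V) a b : (a <= b)%N ->
  (forall i, (a <= i)%N -> (i < b)%N -> f i = 0) ->
  \sum_(i < a) f i = \sum_(i < b) f i.
Proof.
move=> hab hz; rewrite -!(big_mkord xpredT) (@big_cat_nat _ _ _ a 0 b _ _ (leq0n a) hab) /=.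
rewrite [X in _ + X]big1_seq ?addr0 // => i /andP [_]; rewrite mem_index_iota.
by move=> /andP [h1 h2]; apply: hz.
Qed.

Lemma unip_pow (T : pzRingType) (N : T) K s : N ^+ K = 0 ->
  (N + 1) ^+ s = \sum_(i < K) N ^+ i *+ 'C(s, i).
Proof.
move=> hN; rewrite exprD1n.
rewrite (@sum_widen _ (fun i => N ^+ i *+ 'C(s, i)) s.+1 (maxn s.+1 K)) ?leq_maxl //; last first.
  by move=> i hi _; rewrite bin_small.
rewrite [RHS](@sum_widen _ (fun i => N ^+ i *+ 'C(s, i)) K (maxn s.+1 K)) ?leq_maxr //.
by move=> i hi _; rewrite -(subnKC hi) exprD hN mul0r mul0rn.
Qed.

Definition ev d (P : 'M[{poly int}]_d) (x : int) : 'M[int]_d :=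
  map_mx (horner_eval x) P.

Definition pvec d (P : 'M[{poly int}]_d) (w : 'cV[int]_d) : 'cV[{poly int}]_d :=
  P *m map_mx polyC w.

Lemma ev_mul d P w x : @ev d P x *m w = map_mx (horner_eval x) (pvec P w).
Proof.
rewrite /pvec map_mxM; congr (_ *m _); apply/matrixP => i j.
by rewrite !mxE /= horner_evalE hornerC.
Qed.

Definition cdot (R : numFieldType) d (c : 'cV[R]_d) (w : 'cV[int]_d) : R :=
  \sum_i c i 0 * (w i 0)%:~R.

Lemma cdot0 (R : numFieldType) d (c : 'cV[R]_d) : cdot c 0 = 0.
Proof. by rewrite /cdot big1 // => i _ /=; rewrite mxE mulr0. Qed.

Lemma cdotD (R : numFieldType) d (c : 'cV[R]_d) w1 w2 : cdot c (w1 + w2) = cdot c w1 + cdot c w2.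
Proof. by rewrite /cdot -big_split; apply: eq_bigr => i _ /=; rewrite mxE rmorphD mulrDr. Qed.

Lemma cdotB (R : numFieldType) d (c : 'cV[R]_d) w1 w2 : cdot c (w1 - w2) = cdot c w1 - cdot c w2.
Proof.
by rewrite /cdot -sumrB; apply: eq_bigr => i _ /=; rewrite !mxE rmorphB mulrBr.
Qed.

Lemma cdotZ (R : numFieldType) d (c : 'cV[R]_d) z w : cdot c (z *: w) = z%:~R * cdot c w.
Proof.
rewrite /cdot mulr_sumr; apply: eq_bigr => i _.
by rewrite /= mxE rmorphM /= mulrCA.
Qed.

Lemma cdotMn (R : numFieldType) d (c : 'cV[R]_d) w n : cdot c (w *+ n) = cdot c w *+ n.
Proof.
by rewrite -scaler_nat cdotZ rmorph_nat mulr_natl.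
Qed.

Lemma cdot_sum (R : numFieldType) d (c : 'cV[R]_d) I (r : seq I) (F : I -> 'cV[int]_d) :
  cdot c (\sum_(j <- r) F j) = \sum_(j <- r) cdot c (F j).
Proof.
elim: r => [|a r ih]; first by rewrite !big_nil cdot0.
by rewrite !big_cons cdotD ih.
Qed.

Definition fc (R : numFieldType) d (p : 'cV[{poly int}]_d) (c : 'cV[R]_d) : {poly R} :=
  \sum_i c i 0 *: map_poly (intr : int -> R) (p i 0).

Lemma fc_eval (R : numFieldType) d (p : 'cV[{poly int}]_d) (c : 'cV[R]_d) (x : int) :
  (fc p c).[x%:~R] = cdot c (map_mx (horner_eval x) p).
Proof.
rewrite /fc /cdot horner_sum; apply: eq_bigr => i _.
by rewrite hornerZ mxE /= horner_map.
Qed.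

Lemma fc_size (R : numFieldType) d (p : 'cV[{poly int}]_d) (c : 'cV[R]_d) M :
  (forall i, leq (size (p i 0)) M) -> (size (fc p c) <= M)%N.
Proof.
move=> h; apply: leq_trans (size_sum _ _ _) _; apply/bigmax_leqP => i _.
apply: leq_trans (size_scale_leq _ _) _; apply: leq_trans (size_map_le _ _) _.
exact: h.
Qed.


Lemma natfact_cancel (R : numDomainType) (a b : R) n : a *+ n`! = b *+ n`! -> a = b.
Proof.
rewrite -[a *+ _]mulr_natr -[b *+ _]mulr_natr => /mulIf; apply; by rewrite pnatr_eq0 -lt0n fact_gt0.
Qed.

Lemma cp_int m k (n : nat) : (k`! %| m)%N -> (cp m k).[n%:Z] = ('C(m * n, k))%:R.
Proof.
move=> hd; apply: (@natfact_cancel int _ _ k).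
have e : forall p : {poly int}, map_poly (intr : int -> int) p = p.
  by move=> p; apply: map_poly_id => z _; rewrite intz.
have := cp_eval (T := int) (n%:R) hd.
rewrite !e.
have -> : (m%:R * n%:R : int) = (m * n)%:R by rewrite natrM.
move=> h; have -> : (n : int) = n%:R by rewrite natz.
rewrite h.
rewrite -[Fp k]e Fp_eval -bin_ffact natrM mulr_natr.
done.
Qed.

Lemma cp_R (R : numFieldType) m k : (0 < m)%N -> (k`! %| m)%N ->
  (map_poly (intr : int -> R) (cp m k)).[(m%:R)^-1] = ('C(1, k))%:R.
Proof.
move=> hm hd; apply: (@natfact_cancel R _ _ k).
rewrite cp_eval // mulfV ?pnatr_eq0 -?lt0n // (Fp_eval R k 1).
by rewrite -bin_ffact natrM mulr_natr.
Qed.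

Definition Umap d (u : 'M[int]_d) K : 'M[{poly int}]_d :=
  \sum_(i < K) cp K`! i *: map_mx polyC ((u - 1%:M) ^+ i).

Lemma Umap_ev d (u : 'M[int]_d) K x :
  ev (Umap u K) x = \sum_(i < K) (cp K`! i).[x] *: (u - 1%:M) ^+ i.
Proof.
rewrite /ev /Umap; apply/matrixP => a b; rewrite mxE summxE /= horner_evalE.
rewrite horner_sum summxE; apply: eq_bigr => i _.
by rewrite !mxE hornerM hornerC.
Qed.

Lemma Umap_pow d (u : 'M[int]_d) K (n : nat) : (u - 1%:M) ^+ K = 0 ->
  ev (Umap u K) n%:Z = u ^+ (K`! * n).
Proof.
move=> hN; rewrite Umap_ev.
transitivity ((u - 1%:M + 1) ^+ (K`! * n)); last by rewrite -idmxE subrK.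
rewrite (unip_pow _ hN); apply: eq_bigr => i _.
by rewrite cp_int ?fact_dvd // ?(ltnW (ltn_ord i)) // scaler_nat.
Qed.

Lemma Umap0 d (u : 'M[int]_d) K : (u - 1%:M) ^+ K = 0 -> ev (Umap u K) 0 = 1%:M.
Proof. by move=> hN; rewrite (Umap_pow 0 hN) muln0 expr0 idmxE. Qed.

Lemma gen_exp d (S : seq 'M[int]_d) s k : s \in S -> gen_group S (s ^+ k).
Proof.
move=> hs; elim: k => [|k ih]; first by rewrite expr0 -idmxE; constructor.
by rewrite exprSr -mulmxE; apply: gen_mul.
Qed.

Lemma gen_mulmx d (S : seq 'M[int]_d) g h :
  gen_group S g -> gen_group S h -> gen_group S (g *m h).
Proof.
move=> hg; elim => [|h' s _ ih hs|h' s _ ih hs]; first by rewrite mulmx1.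
  by rewrite mulmxA; apply: gen_mul.
by rewrite mulmxA; apply: gen_mulV.
Qed.

Lemma cdot_pow (R : numFieldType) d (u : 'M[int]_d) K (c : 'cV[R]_d) w s :
  (u - 1%:M) ^+ K = 0 ->
  cdot c (u ^+ s *m w) = \sum_(i < K) cdot c ((u - 1%:M) ^+ i *m w) * ('C(s, i))%:R.
Proof.
move=> hN.
have -> : u ^+ s = (u - 1%:M + 1) ^+ s by rewrite -idmxE subrK.
rewrite (unip_pow _ hN) mulmx_suml cdot_sum; apply: eq_bigr => i _.
by rewrite -scaler_nat -scalemxAl cdotZ mulrC natz.
Qed.

Lemma interp (R : numFieldType) d (u : 'M[int]_d) K (c : 'cV[R]_d) w (b : R) :
  (u - 1%:M) ^+ K = 0 ->
  (forall k : nat, cdot c (u ^+ (K`! * k) *m w) = b) -> cdot c (u *m w) = b.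
Proof.
move=> hN hk.
set H := \sum_(i < K) cdot c ((u - 1%:M) ^+ i *m w) *: map_poly (intr : int -> R) (cp K`! i).
have hH : forall k : nat, H.[k%:R] = b.
  move=> k; rewrite -(hk k) (cdot_pow _ _ _ hN) horner_sum; apply: eq_bigr => i _.
  rewrite hornerZ (_ : (k%:R : R) = (k%:Z)%:~R) // horner_map /=.
  by rewrite cp_int ?fact_dvd ?(ltnW (ltn_ord i)) // rmorph_nat.
have : H - b%:P = 0.
  by apply: roots_inf => k; rewrite hornerD hornerN hornerC hH subrr.
move/eqP; rewrite subr_eq0 => /eqP hHb.
have := congr1 (fun p : {poly R} => p.[(K`!%:R)^-1]) hHb; rewrite /= hornerC => <-.
rewrite -[u in cdot c (u *m w)]expr1 (cdot_pow _ _ _ hN) horner_sum.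
apply: eq_bigr => i _.
by rewrite hornerZ cp_R ?fact_gt0 ?fact_dvd ?(ltnW (ltn_ord i)).
Qed.


Definition good d (S : seq 'M[int]_d) (P : 'M[{poly int}]_d) :=
  ev P 0 = 1%:M /\ forall n : nat, gen_group S (ev P n%:Z).

Definition ann (R : numFieldType) d (v : 'cV[int]_d) (P : 'M[{poly int}]_d) (c : 'cV[R]_d) :=
  forall n : nat, cdot c (ev P n%:Z *m v) = cdot c v.

Lemma ev_compX d (P : 'M[{poly int}]_d) M x :
  ev (map_mx (fun q => q \Po 'X^M) P) x = ev P (x ^+ M).
Proof. by apply/matrixP => i j; rewrite !mxE /= !horner_evalE horner_comp hornerXn. Qed.

Lemma ev_mulmx d (P Q : 'M[{poly int}]_d) x : ev (P *m Q) x = ev P x *m ev Q x.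
Proof. by rewrite /ev map_mxM. Qed.

Lemma bound_ex (I : finType) (f : I -> nat) : exists M, forall i, (f i <= M)%N.
Proof. by exists (\max_i f i) => i; apply: leq_bigmax. Qed.

Definition coefv d (pb : 'cV[{poly int}]_d) (j : nat) : 'cV[int]_d :=
  \col_i (pb i 0)`_j.

Lemma pb_expand d (pb : 'cV[{poly int}]_d) J x : (forall i, leq (size (pb i 0)) J) ->
  map_mx (horner_eval x) pb = \sum_(j < J) x ^+ j *: coefv pb j.
Proof.
move=> hJ; apply/matrixP => i k; rewrite mxE summxE /= horner_evalE.
have -> : k = 0 by apply: ord1.
rewrite (horner_coef_wide _ (hJ i)); apply: eq_bigr => j _.
by rewrite !mxE mulrC.
Qed.

Lemma pvec_size d (P : 'M[{poly int}]_d) M w :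
  (forall i l, leq (size (P i l)) M) -> forall i, leq (size (pvec P w i 0)) M.
Proof.
move=> h i; rewrite /pvec mxE; apply: leq_trans (size_sum _ _ _) _.
apply/bigmax_leqP => l _; rewrite mxE mulrC mul_polyC.
exact: leq_trans (size_scale_leq _ _) (h i l).
Qed.

Lemma comb (R : numFieldType) d (S : seq 'M[int]_d) (v : 'cV[int]_d) A B :
  good S A -> good S B ->
  exists Q, good S Q /\ forall c : 'cV[R]_d, ann v Q c ->
    ann v A c /\ forall k t : nat,
      cdot c (ev A k%:Z *m (ev B t%:Z *m v)) = cdot c (ev A k%:Z *m v).
Proof.
move=> [hA0 hAg] [hB0 hBg].
pose pb := pvec B v.
have [J0 hJ0] := bound_ex (fun i : 'I_d => size (pb i 0)).
pose J := J0.+1.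
have hJ : forall i, leq (size (pb i 0)) J by move=> i; apply: leq_trans (hJ0 i) _.
have [MA hMA] := bound_ex (fun p : 'I_d * 'I_d => size (A p.1 p.2)).
pose M := MA.+1.
have hM0 : (0 < M)%N by [].
pose Q := A *m map_mx (fun q => q \Po 'X^M) B.
have evQ : forall x, ev Q x = ev A x *m ev B (x ^+ M).
  by move=> x; rewrite ev_mulmx ev_compX.
exists Q; split.
  split; first by rewrite evQ expr0n /= hA0 hB0 mul1mx.
  move=> n; rewrite evQ; apply: gen_mulmx => //.
  have -> : (n%:Z) ^+ M = (n ^ M)%N%:Z by rewrite -!natz natrX.
  exact: hBg.
move=> c hQ.
pose b j := coefv pb j.
have hBexp : forall t : int, ev B t *m v = \sum_(j < J) t ^+ j *: b j.
  by move=> t; rewrite ev_mul (pb_expand _ hJ).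
have hb0 : b 0%N = v.
  apply/matrixP => i k; have -> : k = 0 by apply: ord1.
  rewrite [b 0%N i 0]mxE -horner_coef0.
  have := congr1 (fun w : 'cV[int]_d => w i 0) (ev_mul B v 0).
  rewrite hB0 mul1mx /= => ->.
  by rewrite [RHS]mxE.
pose a j := fc (pvec A (b j)) c.
have ha_size : forall j, (size (a j) <= M)%N.
  move=> j; apply: fc_size; apply: pvec_size => i l.
  by apply: leq_trans (hMA (i, l)) _.
have ha_eval : forall (x : int) j, (a j).[x%:~R] = cdot c (ev A x *m b j).
  by move=> x j; rewrite fc_eval ev_mul.
pose G := \sum_(j < J) 'X^(M * j) * a j.
have hG : forall n : nat, G.[n%:R] = cdot c (ev Q n%:Z *m v).
  move=> n; rewrite evQ -mulmxA hBexp mulmx_sumr cdot_sum horner_sum.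
  apply: eq_bigr => j _; rewrite -scalemxAr cdotZ hornerM hornerXn.
  rewrite -(ha_eval n%:Z) rmorphXn /= rmorphXn /= exprM.
  done.
have hGc : G = (cdot c v)%:P.
  apply/eqP; rewrite -subr_eq0; apply/eqP; apply: roots_inf => n.
  by rewrite hornerD hornerN hornerC hG hQ subrr.
have hcoef : forall j r, (j < J)%N -> (r < M)%N -> G`_(M * j + r) = (a j)`_r.
  move=> j r hj hr; rewrite coef_sum (bigD1 (Ordinal hj)) //= coefXnM.
  rewrite ifF; last by apply/negbTE; rewrite -leqNgt leq_addr.
  rewrite addKn big1 ?addr0 // => j0 hj0.
  rewrite coefXnM; case: ifP => // hlt.
  apply: nth_default; apply: leq_trans (ha_size _) _.
  have hne : (j0 : nat) != j.
    by apply: contra hj0 => /eqP hh; apply/eqP; apply: val_inj.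
  have hle : (j0 <= j)%N.
    move/negbT: hlt; rewrite -leqNgt => hlt.
    have : (M * j0 < M * j.+1)%N by rewrite mulnS (leq_ltn_trans hlt) // addnC ltn_add2r.
    by rewrite ltn_pmul2l.
  have hlt2 : (j0 < j)%N by rewrite ltn_neqAle hne hle.
  have h1 : (M * j0.+1 <= M * j)%N by rewrite leq_pmul2l.
  rewrite mulnS in h1; lia.
have hG0 : forall i, (0 < i)%N -> G`_i = 0.
  by move=> i hi; rewrite hGc coefC gtn_eqF.
have haj0 : forall j, (0 < j)%N -> (j < J)%N -> a j = 0.
  move=> j hj hjJ; apply/polyP => r; rewrite coef0.
  case: (ltnP r M) => hr; last by apply: nth_default; apply: leq_trans (ha_size j) hr.
  rewrite -hcoef // hG0 //.
  by apply: leq_trans (leq_addr _ _); rewrite muln_gt0 hM0 hj.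
have ha0 : forall x : int, cdot c (ev A x *m v) = cdot c v.
  move=> x; rewrite -hb0 -ha_eval.
  have -> : a 0%N = ((a 0%N)`_0)%:P.
    apply/polyP => r; rewrite coefC; case: eqP => [->|/eqP hr] //.
    case: (ltnP r M) => hrM; last by apply: nth_default; apply: leq_trans (ha_size _) hrM.
    by rewrite -(hcoef 0%N r) // muln0 add0n hG0 // lt0n.
  rewrite hornerC -horner_coef0 (ha_eval 0).
  by rewrite hA0 mul1mx.
split; first by move=> n; apply: ha0.
move=> k t; rewrite hBexp mulmx_sumr cdot_sum big_ord_recl /= big1 ?addr0.
  by rewrite expr0 -scalemxAr scale1r hb0.
move=> j _; rewrite -scalemxAr cdotZ -ha_eval haj0 ?horner0 ?mulr0 //.
by rewrite /bump /= add1n ltnS ltn_ord.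
Qed.



Lemma ex_max_prop (T : Type) (Pr : T -> Prop) (f : T -> nat) (m : nat) :
  (exists x, Pr x) -> (forall x, Pr x -> (f x <= m)%N) ->
  exists x, Pr x /\ forall y, Pr y -> (f y <= f x)%N.
Proof.
move=> [x hx] hb.
have : (m - f x <= m - f x)%N by [].
move: {2}(m - f x)%N => n; elim: n x hx => [|n ih] x hx hn.
  exists x; split => // y hy; have := hb y hy; lia.
case: (classic (exists y, Pr y /\ (f x < f y)%N)) => [[y [hy hlt]]|hno].
  apply: (ih y hy); have := hb y hy; lia.
exists x; split => // y hy; rewrite leqNgt; apply/negP => h; apply: hno; by exists y.
Qed.

Definition NP d (v : 'cV[int]_d) (P : 'M[{poly int}]_d) : nat :=
  (\max_(i : 'I_d) size (pvec P v i 0%R)).+1.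

Definition Wm (R : numFieldType) d (v : 'cV[int]_d) (P : 'M[{poly int}]_d) :
  'M[R]_(NP v P, d) :=
  \matrix_(n < NP v P, i < d) (((ev P (n : nat)%:Z *m v) - v) i 0)%:~R.

Lemma Wm_entry (R : numFieldType) d v P (c : 'cV[R]_d) n :
  (Wm R v P *m c) n 0 = cdot c (ev P (n : nat)%:Z *m v) - cdot c v.
Proof.
rewrite -cdotB mxE /cdot; apply: eq_bigr => i _.
by rewrite mxE mulrC.
Qed.

Lemma ann_W (R : numFieldType) d v P (c : 'cV[R]_d) :
  ann v P c -> Wm R v P *m c = 0.
Proof.
move=> h; apply/matrixP => n k; have -> : k = 0 by apply: ord1.
by rewrite Wm_entry h subrr mxE.
Qed.

Lemma W_ann (R : numFieldType) d v P (c : 'cV[R]_d) :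
  Wm R v P *m c = 0 -> ann v P c.
Proof.
move=> h.
pose f := fc (pvec P v) c - (cdot c v)%:P.
have hf : forall n : nat, f.[n%:R] = cdot c (ev P n%:Z *m v) - cdot c v.
  by move=> n; rewrite hornerD hornerN hornerC (fc_eval _ _ n%:Z) ev_mul.
have f0 : f = 0.
  apply: (@roots_fin _ (NP v P)).
    apply: leq_trans (size_polyD _ _) _; rewrite geq_max; apply/andP; split.
      apply: fc_size => i; rewrite /NP; apply: leq_trans (leqnSn _); exact: (@leq_bigmax _ (fun i0 => size (pvec P v i0 0)) i).
    by rewrite size_polyN size_polyC; case: (_ != 0).
  move=> n hn; rewrite hf.
  have := congr1 (fun M : 'cV[R]_(NP v P) => M (Ordinal hn) 0) h.
  by rewrite Wm_entry /= mxE.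
move=> n; apply/eqP; rewrite -subr_eq0 -hf f0 horner0.
done.
Qed.

Lemma mxR_mul (R : numFieldType) d (A B : 'M[int]_d) :
  mxR R (A *m B) = mxR R A *m mxR R B.
Proof.
apply/matrixP => i j; rewrite !mxE rmorph_sum; apply: eq_bigr => k _.
by rewrite !mxE rmorphM.
Qed.

Lemma mxR1 (R : numFieldType) d : mxR R (1%:M : 'M[int]_d) = 1%:M.
Proof. by apply/matrixP => i j; rewrite !mxE; case: (i == j). Qed.

Lemma cdot_tr (R : numFieldType) d (g : 'M[int]_d) (c : 'cV[R]_d) w :
  cdot ((mxR R g)^T *m c) w = cdot c (g *m w).
Proof.
rewrite /cdot.
under eq_bigr => i _ do rewrite mxE mulr_suml.
rewrite exchange_big /=; apply: eq_bigr => l _.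
rewrite mxE rmorph_sum mulr_sumr; apply: eq_bigr => i _.
by rewrite !mxE rmorphM /= mulrCA mulrA.
Qed.

Lemma cdot_delta (R : numFieldType) d (i : 'I_d) (w : 'cV[int]_d) :
  cdot (delta_mx i 0 : 'cV[R]_d) w = (w i 0)%:~R.
Proof.
rewrite /cdot (bigD1 i) //= big1 ?addr0; first by rewrite mxE !eqxx mul1r.
by move=> j hj; rewrite mxE (negbTE hj) mul0r.
Qed.

Lemma unip_unit d (u : 'M[int]_d) K : (u - 1%:M) ^+ K = 0 -> invmx u *m u = 1%:M.
Proof.
move=> hK.
have hx : (1%:M - u) ^+ K = 0.
  by rewrite -opprB exprNn hK mulr0.
have := subrX1 (1%:M - u) K; rewrite hx sub0r idmxE addrAC subrr add0r mulNr.
move=> /oppr_inj hh.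
have hu : u *m (\sum_(i < K) (1 - u) ^+ i) = 1%:M by rewrite mulmxE -hh idmxE.
have [hu1 _] := mulmx1_unit hu.
exact: mulVmx.
Qed.

Lemma inv_inv (F : fieldType) m d (W : 'M[F]_(m, d)) (X Y : 'M[F]_d) :
  X *m Y = 1%:M -> (W *m X <= W)%MS -> (W *m Y <= W)%MS.
Proof.
move=> hXY hsub.
have [hX _] := mulmx1_unit hXY.
have hr : \rank (W *m X) = \rank W by rewrite mxrankMfree // row_free_unit.
have hWX : (W <= W *m X)%MS by rewrite -(mxrank_leqif_sup hsub).2 hr eqxx.
by apply: submx_trans (submxMr Y hWX) _; rewrite -mulmxA hXY mulmx1.
Qed.

Lemma gen_inv (R : numFieldType) m d (S : seq 'M[int]_d) (W : 'M[R]_(m, d)) :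
  (forall s, s \in S -> unipotent s) ->
  (forall s, s \in S -> (W *m (mxR R s)^T <= W)%MS) ->
  forall g, gen_group S g -> (W *m (mxR R g)^T <= W)%MS.
Proof.
move=> hS hW g; elim => [|g' s _ ih hs|g' s _ ih hs].
- by rewrite mxR1 trmx1 mulmx1.
- rewrite mxR_mul trmx_mul mulmxA.
  exact: submx_trans (submxMr _ (hW s hs)) ih.
- rewrite mxR_mul trmx_mul mulmxA.
  apply: submx_trans (submxMr _ _) ih.
  apply: (inv_inv (X := (mxR R s)^T)) (hW s hs).
  have [K hK] := hS s hs.
  by rewrite -trmx_mul -mxR_mul (unip_unit hK) mxR1 trmx1.
Qed.

Unset Implicit Arguments.


Theorem theorem2p1 (R : rcfType) (d : nat) (hd : (2 <= d)%N)
    (S : seq 'M[int]_d)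
    (hS : forall s, s \in S -> unipotent s)
    (hirr : irreducible_action R (gen_group S))
    (v : 'cV[int]_d) (hv : v != 0) :
  exists (gamma : nat -> 'M[int]_d) (p : 'I_d -> {poly int}),
    (forall n, gen_group S (gamma n)) /\
    (forall n : nat, (1 <= n)%N ->
       gamma n *m v = \col_i (p i).[n%:Z]) /\
    (forall c : 'I_d -> int,
       (size (\sum_i c i *: p i)%R <= 1)%N -> forall i, c i = 0).
Proof.
have [P0 [hP0 hmax]] : exists P0, good S P0 /\
    forall P, good S P -> (\rank (Wm R v P) <= \rank (Wm R v P0))%N.
  apply: (@ex_max_prop _ _ (fun P => \rank (Wm R v P)) d).
    exists 1%:M; split; first by rewrite /ev map_mx1.
    by move=> n; rewrite /ev map_mx1; constructor.
  by move=> P _; exact: rank_leq_col.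
have e0 : ev P0 0%:Z = 1%:M := hP0.1.
have maxincl : forall B, good S B -> forall c : 'cV[R]_d, ann v P0 c -> ann v B c.
  move=> B hB c hc.
  have [Q [hQ hQc]] := comb R v hP0 hB.
  have WQ : (Wm R v P0 <= Wm R v Q)%MS.
    apply: sub_ker => c' hc'; apply: ann_W; exact: (hQc c' (W_ann hc')).1.
  have WQ' : (Wm R v Q <= Wm R v P0)%MS.
    rewrite -(mxrank_leqif_sup WQ).2 eqn_leq (mxrank_leqif_sup WQ).1 /=; exact: hmax.
  move/submxP: WQ' => [X hX].
  have hcQ : ann v Q c by apply: W_ann; rewrite hX -mulmxA (ann_W hc) mulmx0.
  move=> t; have := (hQc c hcQ).2 0%N t; by rewrite e0 !mul1mx.
have invu : forall u, u \in S -> (Wm R v P0 *m (mxR R u)^T <= Wm R v P0)%MS.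
  move=> u hu; have [K hK] := hS u hu.
  have hU : good S (Umap u K).
    split; first exact: Umap0 hK.
    by move=> n; rewrite (Umap_pow _ hK); apply: gen_exp.
  apply: sub_ker => c hc; rewrite -mulmxA; apply: ann_W.
  have hc0 := W_ann hc.
  have [Q [hQ hQc]] := comb R v hU hP0.
  have hcQ := maxincl Q hQ c hc0.
  move=> n; rewrite !cdot_tr.
  apply/eqP; rewrite -subr_eq0 -cdotB -mulmxBr; apply/eqP.
  apply: (interp hK) => k.
  by rewrite mulmxBr cdotB -(Umap_pow _ hK) (hQc c hcQ).2 subrr.
have hinv := gen_inv hS invu.
case: (eqVneq (Wm R v P0) 0) => hW0.
  exfalso.
  have hall : forall c : 'cV[R]_d, ann v P0 c.
    by move=> c; apply: W_ann; rewrite hW0 mul0mx.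
  have hfix : forall s, s \in S -> s *m v = v.
    move=> s hs; have [K hK] := hS s hs.
    have hU : good S (Umap s K).
      split; first exact: Umap0 hK.
      by move=> n; rewrite (Umap_pow _ hK); apply: gen_exp.
    apply/matrixP => i k; have -> : k = 0 by apply: ord1.
    apply: (@intr_inj R).
    have := interp (c := delta_mx i 0) (w := v) (b := cdot (delta_mx i 0 : 'cV[R]_d) v) hK.
    rewrite !cdot_delta; apply => k'.
    have := maxincl _ hU _ (hall (delta_mx i 0)) k'.
    by rewrite (Umap_pow _ hK) => ->; rewrite cdot_delta.
  have hfixg : forall g, gen_group S g -> g *m v = v.
    move=> g; elim => [|g' s _ ih hs|g' s _ ih hs]; first by rewrite mul1mx.
      by rewrite -mulmxA hfix.
    have [K hK] := hS s hs.
    rewrite -mulmxA.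
    have -> : invmx s *m v = v by rewrite -{1}(hfix s hs) mulmxA (unip_unit hK) mul1mx.
    done.
  pose U : 'M[R]_d := \matrix_(i, j) (v j 0)%:~R.
  have hUinv : forall g, gen_group S g -> (U *m (mxR R g)^T <= U)%MS.
    move=> g hg; rewrite (_ : U *m (mxR R g)^T = U) ?submx_refl //.
    apply/matrixP => i j; rewrite !mxE -(hfixg g hg) mxE rmorph_sum; apply: eq_bigr => l _.
    by rewrite !mxE rmorphM mulrC.
  have i0 : 'I_d by exists 0%N; lia.
  case: (hirr U hUinv) => [hU0|hUf].
    move: hv; apply/negP; rewrite negbK; apply/eqP/matrixP => j k.
    have -> : k = 0 by apply: ord1.
    have := congr1 (fun M : 'M[R]_d => M i0 j) hU0; rewrite !mxE => /eqP.
    by rewrite intr_eq0 => /eqP ->.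
  have : (\rank U <= 1)%N.
    have -> : U = const_mx 1 *m (\row_j (v j 0)%:~R : 'rV[R]_d).
      by apply/matrixP => i j; rewrite !mxE big_ord1 !mxE mul1r.
    apply: leq_trans (mxrankM_maxl _ _) _; exact: rank_leq_col.
  move: hUf; rewrite /row_full => /eqP ->; lia.
have hfull : row_full (Wm R v P0).
  have hg : forall g, gen_group S g ->
      (<<Wm R v P0>>%MS *m (mxR R g)^T <= <<Wm R v P0>>%MS)%MS.
    by move=> g hg; rewrite (eqmxMr _ (genmxE _)) !genmxE; exact: hinv.
  case: (hirr _ hg) => [h0|hf]; last by rewrite -(eq_row_full (genmxE _)).
  exfalso; move/eqP: hW0; apply; apply/eqP.
  by rewrite -mxrank_eq0 -mxrank_gen h0 mxrank0.
exists (fun n => ev P0 n%:Z), (fun i => pvec P0 v i 0).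
split; first exact: hP0.2.
split.
  move=> n _; rewrite ev_mul; apply/matrixP => i k; have -> : k = 0 by apply: ord1.
  by rewrite !mxE.
move=> c hc i.
pose q := \sum_i c i *: pvec P0 v i 0.
have hc' : (size q <= 1)%N := hc.
pose cR : 'cV[R]_d := \col_i (c i)%:~R.
have hq : forall x : int, cdot cR (ev P0 x *m v) = (q.[x])%:~R.
  move=> x; rewrite ev_mul /cdot horner_sum rmorph_sum; apply: eq_bigr => j _.
  by rewrite !mxE hornerZ rmorphM.
have hann : ann v P0 cR.
  move=> n; rewrite -[in RHS](mul1mx v) -e0 !hq.
  by rewrite (size1_polyC hc') !hornerC.
have hW := ann_W hann.
move/row_fullP: hfull => [B hB].
have : cR = 0 by rewrite -[cR]mul1mx -hB -mulmxA hW mulmx0.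
move=> /matrixP /(_ i 0); rewrite !mxE => /eqP; rewrite intr_eq0 => /eqP.
done.
Qed.
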